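(* Let $b>0$, let $m\colon[0,+\infty)\to[0,+\infty)$ be an increasing function such that $m(t)\le Ct$ for all $t\ge0$ (for some constant $C$) and $m(t)=0$ for $t\in[0,b)$, and let $Q\colon[0,+\infty)\to[0,+\infty)$ be continuous with $Q(t)=O(t)$ as $t\to+\infty$. Then for every $N\ge0$ there exists $C_2\ge0$ such that for all $b\le r<R<+\infty$ $$\int_r^R\frac{Q(t)}{t^2}\,dm(t)\le C_2\int_r^R t^N\sup_{s\ge t}\frac{Q(s)}{s^{2+N}}\,dt+C_2.$$
   Context: The Stieltjes integral $\int_r^R\dots dm$ is taken over the interval $(r,R]$. *)

(* Defs.v *)
From HB Require Import structures.
From mathcomp Require Import all_boot all_order all_algebra.
From mathcomp Require Import all_classical all_reals all_analysis.
Set Implicit Arguments. Unset Strict Implicit. Unset Printing Implicit Defensive.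
Import Order.TTheory GRing.Theory Num.Theory.
Local Open Scope classical_set_scope.
Local Open Scope ring_scope.

Definition tail_sup (R : realType) (Q : R -> R) (N t : R) : \bar R :=
  ereal_sup [set (Q s / s `^ (2 + N))%:E | s in `[t, +oo[%classic].

(* Main.v *)
Require Import Defs.
From HB Require Import structures.
From mathcomp Require Import all_boot all_order all_algebra.
From mathcomp Require Import all_classical all_reals all_analysis.
From mathcomp Require Import measurable_realfun.
From mathcomp Require Import ring lra.
Import Order.TTheory GRing.Theory Num.Theory numFieldNormedType.Exports.
Local Open Scope classical_set_scope.
Local Open Scope ring_scope.

Lemma splitoc (R : realType) (x0 x1 x2 : R) (S : set R) : x0 <= x1 -> x1 <= x2 ->
  `]x0, x2] `&` S = (`]x0, x1] `&` S) `|` (`]x1, x2] `&` S).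
Proof.
move=> h1 h2; apply/seteqP; split => x /=.
- rewrite !in_itv/= => -[/andP[a1 a2] Sx].
  case: (leP x x1) => hx; [left|right]; split => //; apply/andP; split => //.
- rewrite !in_itv/= => -[[/andP[a1 a2] Sx]|[/andP[a1 a2] Sx]]; split => //;
  apply/andP; split; lra.
Qed.

Lemma disjoc (R : realType) (x0 x1 x2 : R) (S : set R) :
  [disjoint (`]x0, x1] `&` S) & (`]x1, x2] `&` S)].
Proof.
apply/disj_setPS => x [[/= + _] [+ _]]; rewrite !in_itv/= => /andP[? ?] /andP[? ?].
lra.
Qed.
Section Main.
Variable R : realType.
Variables (b : R) (m Q : R -> R) (mr : cumulative R R) (C K N : R).
Hypothesis b0 : 0 < b.
Hypothesis mnd : forall s t, 0 <= s -> s <= t -> m s <= m t.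
Hypothesis m0 : forall t, 0 <= t -> 0 <= m t.
Hypothesis C0 : 0 <= C.
Hypothesis mC : forall t, 0 <= t -> m t <= C * t.
Hypothesis mrl : forall t, 0 <= t -> m x @[x --> t^'+] --> mr t.
Hypothesis Qc : {within `[0, +oo[, continuous Q}.
Hypothesis Q0 : forall t, 0 <= t -> 0 <= Q t.
Hypothesis K0 : 0 <= K.
Hypothesis QK : forall t, b <= t -> Q t <= K * t.
Hypothesis N0 : 0 <= N.

Let mu := lebesgue_stieltjes_measure mr.

Lemma mr_ge0 x : 0 <= x -> 0 <= mr x.
Proof.
move=> x0; apply: (cvgr_to_ge (mrl x x0)).
near=> y; apply: m0.
near: y; apply: filterS (nbhs_right_gt x) => y /= xy; lra.
Unshelve. all: by end_near. Qed.

Lemma mr_le x z : 0 <= x -> x < z -> mr x <= m z.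
Proof.
move=> x0 xz; apply: (cvgr_to_le (mrl x x0)).
near=> y; apply: mnd.
- near: y; apply: filterS (nbhs_right_gt x) => y /= xy; lra.
- near: y; apply: filterS (nbhs_right_lt xz) => y /= xy; lra.
Unshelve. all: by end_near. Qed.

Lemma mr_lin x : 0 < x -> mr x <= 2 * C * x.
Proof.
move=> x0; have h : x < 2 * x by lra.
have h2 := mr_le _ _ (ltW x0) h.
have h3 : m (2 * x) <= C * (2 * x) by apply: mC; lra.
have -> : 2 * C * x = C * (2 * x) by ring.
exact: le_trans h2 h3.
Qed.

Lemma mu_oc a c : mu `]a, c] = wlength mr `]a, c].
Proof.
rewrite /mu /lebesgue_stieltjes_measure/= /measure_extension/=.
by rewrite measurable_mu_extE//; exact: is_ocitv.
Qed.

Lemma mu_le (B : set R) c : measurable B -> 0 < c -> B `<=` `]0, c] ->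
  (mu B <= (2 * C * c)%:E)%E.
Proof.
move=> mB c0 Bc.
have h : (mu B <= mu `]0%R, c])%E.
  by apply: le_measure; rewrite ?inE//; exact: measurable_itv.
apply: (le_trans h).
rewrite mu_oc wlength_itv/= lte_fin c0/=.
rewrite -EFinB lee_fin.
have := mr_ge0 _ (lexx 0); have := mr_lin _ c0; lra.
Qed.


Let ts t := tail_sup Q N t.

Lemma powE [s] : 0 < s -> s `^ (2 + N) = s ^+ 2 * s `^ N.
Proof.
move=> s0; rewrite powRD ?powR_mulrn ?(ltW s0)//.
by apply/implyP => _; exact: lt0r_neq0.
Qed.

Lemma ts_ge [t s] : t <= s -> ((Q s / s `^ (2 + N))%:E <= ts t)%E.
Proof.
by move=> tsh; apply: ereal_sup_ubound; exists s => //=; rewrite in_itv/= tsh.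
Qed.

Let Kb := K / (b * b `^ N).

Lemma pt_le [s] : b <= s -> Q s / s `^ (2 + N) <= Kb.
Proof.
move=> bs; have s0 : 0 < s by have := b0; lra.
have bN : 0 < b `^ N by apply: powR_gt0.
have sN : b `^ N <= s `^ N by apply: ge0_ler_powR; rewrite ?nnegrE ?(ltW b0) ?(ltW s0).
have sN0 : 0 < s `^ N by apply: powR_gt0.
rewrite powE // /Kb.
rewrite ler_pdivlMr ?mulr_gt0// mulrAC ler_pdivrMr ?mulr_gt0 ?exprn_gt0//.
have h1 : Q s * (b * b `^ N) <= (K * s) * (s * s `^ N).
  apply: ler_pM; rewrite ?mulr_ge0 ?Q0 ?(ltW b0) ?(ltW bN) ?(ltW s0) ?QK//.
  by apply: ler_pM; rewrite ?(ltW b0) ?(ltW bN)//.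
by apply: (le_trans h1); rewrite le_eqVlt; apply/orP; left; apply/eqP; ring.
Qed.

Lemma pt_ge0 [s] : 0 < s -> 0 <= Q s / s `^ (2 + N).
Proof. by move=> s0; rewrite divr_ge0 ?powR_ge0 ?Q0 ?(ltW s0). Qed.

Lemma ts_ge0 [t] : b <= t -> (0 <= ts t)%E.
Proof.
move=> bt; apply: le_trans (ts_ge (lexx t)); rewrite lee_fin pt_ge0//.
by have := b0; lra.
Qed.

Lemma ts_le [t] : b <= t -> (ts t <= Kb%:E)%E.
Proof.
move=> bt; apply: ge_ereal_sup => y [s]; rewrite /= in_itv/= andbT => hs <-.
by rewrite lee_fin pt_le//; apply: le_trans bt hs.
Qed.

Lemma ts_fin [t] : b <= t -> ts t \is a fin_num.
Proof.
move=> bt; rewrite ge0_fin_numE ?ts_ge0//.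
by apply: le_lt_trans (ts_le bt) _; rewrite ltry.
Qed.

Definition G t := fine (ts (Num.max t b)).

Lemma bmax t : b <= Num.max t b.
Proof. by rewrite le_max lexx orbT. Qed.

Lemma GE [t] : b <= t -> ts t = (G t)%:E.
Proof. by move=> bt; rewrite /G max_l// fineK// ts_fin. Qed.

Lemma G_ni : nonincreasing_fun G.
Proof.
move=> x y xy; rewrite /G fine_le ?ts_fin ?bmax//.
apply: ereal_sup_le => z [s]; rewrite /= in_itv/= andbT => hs <-.
exists s => //=; rewrite in_itv/= andbT.
move: hs; rewrite !ge_max => /andP[h1 h2]; rewrite h2 andbT.
exact: le_trans xy h1.
Qed.

Lemma G_ge0 t : 0 <= G t.
Proof. by rewrite /G fine_ge0// ts_ge0// bmax. Qed.

Lemma G_ub [t s] : b <= t -> t <= s -> Q s / s `^ (2 + N) <= G t.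
Proof. by move=> bt tsh; rewrite -lee_fin -GE// ts_ge. Qed.

Lemma key t : 0 < t -> Q t / t ^+ 2 = t `^ N * (Q t / t `^ (2 + N)).
Proof.
move=> t0; rewrite powE//.
have h : t `^ N != 0 by rewrite gt_eqF// powR_gt0.
have h2 : t != 0 by rewrite gt_eqF.
by field; rewrite h h2.
Qed.

Let Ib := `[b, +oo[%classic : set R.

Lemma mIb : measurable Ib.
Proof. exact: measurable_itv. Qed.

Lemma mQ : measurable_fun Ib Q.
Proof.
apply: subspace_continuous_measurable_fun; first exact: mIb.
apply: continuous_subspaceW Qc => x; rewrite /Ib /= !in_itv/= !andbT => bx.
exact: le_trans (ltW b0) bx.
Qed.

Let u t := ((Num.max t b) ^+ 2)^-1.

Lemma maxpos t : 0 < Num.max t b.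
Proof. exact: lt_le_trans b0 (bmax t). Qed.

Lemma u_ni : nonincreasing_fun u.
Proof.
move=> x y xy; rewrite /u lef_pV2 ?posrE ?exprn_gt0 ?maxpos//.
rewrite ler_pXn2r ?nnegrE ?(ltW (maxpos _))//.
by rewrite ge_max !le_max xy lexx !orbT.
Qed.

Lemma mF : measurable_fun Ib (fun t => (Q t / t ^+ 2)%:E).
Proof.
apply/measurable_EFinP.
apply: (eq_measurable_fun (fun t => Q t * u t)).
  move=> t; rewrite /Ib inE /= in_itv/= andbT => bt.
  by rewrite /u max_l.
apply: measurable_funM; first exact: mQ.
exact: nonincreasing_measurable mIb u_ni.
Qed.

Lemma mH : measurable_fun Ib (fun t => ((t `^ N)%:E * ts t)%E).
Proof.
apply: (eq_measurable_fun (fun t => (t `^ N * G t)%:E)).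
  move=> t; rewrite /Ib inE /= in_itv/= andbT => bt.
  by rewrite EFinM GE.
apply/measurable_EFinP.
apply: measurable_funM; first exact: measurable_funTS (measurable_powR N).
exact: nonincreasing_measurable mIb G_ni.
Qed.

Lemma int_ub (mu0 : {measure set (measurableTypeR R) -> \bar R}) [D : set R] [f : R -> \bar R] [M] :
  measurable D -> measurable_fun D f -> (forall x, D x -> (0 <= f x <= M%:E)%E) ->
  (\int[mu0]_(x in D) f x <= M%:E * mu0 D)%E.
Proof.
move=> mD mf hf.
rewrite -integral_cst//.
apply: ge0_le_integral => //.
- by move=> x /hf /andP[].
- by move=> x /hf /andP[].
Qed.

Lemma int_lb (mu0 : {measure set (measurableTypeR R) -> \bar R}) [D : set R] [f : R -> \bar R] [M] :
  measurable D -> measurable_fun D f -> 0 <= M -> (forall x, D x -> (M%:E <= f x)%E) ->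
  (M%:E * mu0 D <= \int[mu0]_(x in D) f x)%E.
Proof.
move=> mD mf M0 hf.
rewrite -integral_cst//.
apply: ge0_le_integral => //.
Qed.

Variables (r R2 : R).
Hypothesis br : b <= r.
Hypothesis rR2 : r < R2.

Let I := `]r, R2]%classic : set R.
Let P n := `]r, r * 2 ^+ n]%classic `&` I.
Let Fn t := (Q t / t ^+ 2)%:E.
Let Hn t := ((t `^ N)%:E * ts t)%E.
Let c := 8 * C * 4 `^ N.
Let Kc := 4 * C * K.

Lemma r0 : 0 < r. Proof. by have := b0; have := br; lra. Qed.

Lemma IIb : I `<=` Ib.
Proof.
move=> x; rewrite /I /Ib /= !in_itv/= andbT => /andP[h _].
by have := br; lra.
Qed.

Lemma mI : measurable I. Proof. exact: measurable_itv. Qed.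

Lemma mP n : measurable (P n).
Proof. by apply: measurableI; exact: measurable_itv. Qed.

Lemma PI n : P n `<=` I. Proof. by move=> x []. Qed.

Lemma mFI [D] : D `<=` I -> measurable_fun D Fn.
Proof. by move=> DI; apply: measurable_funS mIb _ mF => x /DI /IIb. Qed.

Lemma mHI [D] : D `<=` I -> measurable_fun D Hn.
Proof. by move=> DI; apply: measurable_funS mIb _ mH => x /DI /IIb. Qed.

Lemma F0 x : I x -> (0 <= Fn x)%E.
Proof.
move=> /IIb; rewrite /Ib /= in_itv/= andbT => bx.
by rewrite lee_fin divr_ge0 ?sqr_ge0// Q0//; have := b0; lra.
Qed.

Lemma H0 x : I x -> (0 <= Hn x)%E.
Proof.
move=> /IIb; rewrite /Ib /= in_itv/= andbT => bx.
by rewrite mule_ge0// ?lee_fin ?powR_ge0// ts_ge0.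
Qed.

Lemma intF_U [A B] : A `<=` I -> B `<=` I -> measurable A -> measurable B ->
  [disjoint A & B] ->
  (\int[mu]_(x in A `|` B) Fn x = \int[mu]_(x in A) Fn x + \int[mu]_(x in B) Fn x)%E.
Proof.
move=> AI BI mA mB dAB; apply: ge0_integral_setU => //.
- by apply: mFI => x [/AI|/BI].
- by move=> x [/AI|/BI]; exact: F0.
Qed.

Lemma intH_U [A B] : A `<=` I -> B `<=` I -> measurable A -> measurable B ->
  [disjoint A & B] ->
  (\int[lebesgue_measure]_(x in A `|` B) Hn x =
   \int[lebesgue_measure]_(x in A) Hn x + \int[lebesgue_measure]_(x in B) Hn x)%E.
Proof.
move=> AI BI mA mB dAB; apply: ge0_integral_setU => //.
- by apply: mHI => x [/AI|/BI].
- by move=> x [/AI|/BI]; exact: H0.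
Qed.

Lemma c0 : 0 <= c.
Proof. by rewrite /c !mulr_ge0// powR_ge0. Qed.

Lemma base : (\int[mu]_(x in P 1) Fn x <= Kc%:E)%E.
Proof.
have r0 := r0.
have h : (forall x, P 1 x -> (0 <= Fn x <= (K / r)%:E)%E).
  move=> x [hx Ix]; rewrite F0 //=.
  move: hx; rewrite /= in_itv/= => /andP[h1 h2].
  have x0 : 0 < x by lra.
  have hQ : Q x <= K * x by apply: QK; have := br; lra.
  rewrite /Fn lee_fin ler_pdivrMr ?exprn_gt0//.
  apply: le_trans hQ _.
  have -> : K / r * x ^+ 2 = (K * x) * (x / r) by field; rewrite gt_eqF.
  apply: ler_peMr; first by rewrite mulr_ge0// ltW.
  by rewrite ler_pdivlMr// mul1r ltW.
apply: (le_trans (int_ub mu (mP 1) (mFI (PI 1)) h)).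
have hm : (mu (P 1) <= (2 * C * (r * 2 ^+ 1))%:E)%E.
  apply: mu_le; first exact: mP.
    by rewrite mulr_gt0.
  move=> x [+ _]; rewrite /= !in_itv/= => /andP[h1 h2].
  by apply/andP; split => //; lra.
apply: le_trans (lee_wpmul2l _ hm) _.
  by rewrite lee_fin divr_ge0// ltW.
rewrite -EFinM lee_fin /Kc le_eqVlt; apply/orP; left; apply/eqP.
by field; rewrite gt_eqF.
Qed.

Lemma intH_ge0 D : D `<=` I -> (0 <= \int[lebesgue_measure]_(x in D) Hn x)%E.
Proof. by move=> DI; apply: integral_ge0 => x /DI; exact: H0. Qed.

Lemma step n : (\int[mu]_(x in P n.+1) Fn x <=
   c%:E * \int[lebesgue_measure]_(x in P n) Hn x + Kc%:E)%E.
Proof.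
have r0 := r0.
elim: n => [|n IH].
  apply: le_trans base _.
  rewrite -[X in (X <= _)%E]add0e; apply: leeD => //.
  by rewrite mule_ge0 ?lee_fin ?c0// intH_ge0//; exact: PI.
set a := r * 2 ^+ n.
have ra : r <= a by rewrite /a; apply: ler_peMr; [exact: ltW|apply: exprn_ege1; lra].
have e1 : r * 2 ^+ n.+1 = 2 * a by rewrite exprS /a; ring.
have e2 : r * 2 ^+ n.+2 = 4 * a by rewrite !exprS /a; ring.
set B := `]2 * a, 4 * a]%classic `&` I.
have mB : measurable B by apply: measurableI; exact: measurable_itv.
have sp2 : P n.+2 = P n.+1 `|` B.
  by rewrite /P e1 e2 /B; apply: splitoc; lra.
have dPB : [disjoint P n.+1 & B] by rewrite /P /B e1; exact: disjoc.
have BI : B `<=` I by move=> x [].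
rewrite sp2 (intF_U (PI n.+1) BI (mP n.+1) mB dPB).
case: (leP R2 (2 * a)) => hR.
  have -> : B = set0.
    apply/seteqP; split => x //= [+ Ix]; move: Ix; rewrite /I /= !in_itv/=.
    by move=> /andP[h1 h2] /andP[h3 h4]; lra.
  rewrite integral_set0 adde0; apply: le_trans IH _.
  apply: leeD => //; apply: lee_wpmul2l; first by rewrite lee_fin c0.
  apply: ge0_subset_integral; [exact: mP|exact: mP|exact: mHI (PI _)| |].
    by move=> x /PI; exact: H0.
  move=> x [hx Ix]; split => //; move: hx; rewrite /= !in_itv/= e1.
  move=> /andP[h1 h2]; apply/andP; split => //; move: ra; rewrite /a => ra; lra.
set D := `]a, 2 * a]%classic : set R.
have mD : measurable D by exact: measurable_itv.
have eD : `]a, 2 * a] `&` I = D.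
  apply/seteqP; split => x; first by move=> [].
  move=> hx; split => //; move: hx; rewrite /D /I /= !in_itv/=.
  by move=> /andP[h1 h2]; apply/andP; split; lra.
have DI : D `<=` I by rewrite -eD => x [].
have sp1 : P n.+1 = P n `|` D.
  have ea : r * 2 ^+ n = a by [].
  by rewrite /P e1 ea -eD; apply: splitoc; lra.
have a0 : 0 < a by lra.
set g2 := G (2 * a).
have hB : (\int[mu]_(x in B) Fn x <= c%:E * \int[lebesgue_measure]_(x in D) Hn x)%E.
  have hub : forall x, B x -> (0 <= Fn x <= ((4 * a) `^ N * g2)%:E)%E.
    move=> x Bx; rewrite F0 /=; last exact: BI.
    move: Bx => [+ _]; rewrite /= in_itv/= => /andP[h1 h2].
    have x0 : 0 < x by lra.
    rewrite /Fn lee_fin key//.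
    apply: (@le_trans _ _ (x `^ N * g2)).
      apply: ler_wpM2l; first exact: powR_ge0.
      by apply: G_ub; [have := br; lra|lra].
    apply: ler_wpM2r; first exact: G_ge0.
    by apply: ge0_ler_powR; rewrite ?nnegrE//; lra.
  apply: le_trans (int_ub mu mB (mFI BI) hub) _.
  have hm : (mu B <= (2 * C * (4 * a))%:E)%E.
    apply: mu_le => //; first lra.
    move=> x [+ _]; rewrite /= !in_itv/= => /andP[h1 h2].
    by apply/andP; split => //; lra.
  apply: le_trans (lee_wpmul2l _ hm) _.
    by rewrite lee_fin mulr_ge0 ?powR_ge0 ?G_ge0.
  have hlb : forall x, D x -> ((a `^ N * g2)%:E <= Hn x)%E.
    move=> x Dx; have := Dx; rewrite /D /= in_itv/= => /andP[h1 h2].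
    have bx : b <= x by have := br; lra.
    rewrite /Hn GE// -EFinM lee_fin.
    apply: ler_pM; rewrite ?powR_ge0 ?G_ge0//.
      by apply: ge0_ler_powR; rewrite ?nnegrE//; lra.
    exact: G_ni.
  have lD : lebesgue_measure D = a%:E.
    rewrite /D (lebesgue_measure_itv `]a, 2 * a]) /= lte_fin ifT; last lra.
    by rewrite -EFinD; congr (_%:E); ring.
  have hl : (((a `^ N * g2))%:E * a%:E <= \int[lebesgue_measure]_(x in D) Hn x)%E.
    rewrite -lD.
    exact: (int_lb lebesgue_measure mD (mHI DI) (mulr_ge0 (powR_ge0 _ _) (G_ge0 _)) hlb).
  apply: le_trans (lee_wpmul2l _ hl); last by rewrite lee_fin c0.
  rewrite -!EFinM lee_fin /c powRM ?(ltW a0)//; last lra.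
apply: le_trans (leeD IH hB) _.
have dPD : [disjoint P n & D] by rewrite /P -eD; exact: disjoc.
rewrite sp1 (intH_U (PI n) DI (mP n) mD dPD).
rewrite (ge0_muleDr c%:E (intH_ge0 _ (PI n)) (intH_ge0 _ DI)).
by rewrite addeAC.
Qed.

Lemma main_ineq : (\int[mu]_(x in I) Fn x <=
   c%:E * \int[lebesgue_measure]_(x in I) Hn x + Kc%:E)%E.
Proof.
have r0 := r0.
pose n := Num.Def.archi_bound (R2 / r).
have hn : R2 / r < n%:R.
  by apply: archi_boundP; rewrite divr_ge0// ltW//; have := rR2; lra.
have n2 : (n%:R : R) <= 2 ^+ n.
  by rewrite -natrX ler_nat; exact: ltnW (ltn_expl _ (isT : (1 < 2)%N)).
have hR : R2 <= r * 2 ^+ n.+1.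
  have h1 : R2 < n%:R * r by move: hn; rewrite ltr_pdivrMr.
  have h2 : r * n%:R <= r * 2 ^+ n by rewrite ler_wpM2l// ltW.
  have h3 : 0 <= r * 2 ^+ n by rewrite mulr_ge0// ltW.
  have := rR2; rewrite exprS; lra.
have PIe : P n.+1 = I.
  apply/seteqP; split => x; first by case.
  move=> Ix; split => //; move: Ix; rewrite /I /= !in_itv/= => /andP[h1 h2].
  by apply/andP; split => //; have := rR2; lra.
have -> : (\int[mu]_(x in I) Fn x = \int[mu]_(x in P n.+1) Fn x)%E by rewrite PIe.
apply: le_trans (step n) _; apply: leeD => //.
apply: lee_wpmul2l; first by rewrite lee_fin c0.
apply: ge0_subset_integral; [exact: mP|exact: mI|exact: mHI (@subset_refl _ I)| |exact: PI].
exact: H0.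
Qed.
End Main.

Theorem lemma4 (R : realType) (b : R) (m Q : R -> R) (mr : cumulative R R) :
  0 < b ->
  (forall s t, 0 <= s -> s <= t -> m s <= m t) ->
  (forall t, 0 <= t -> 0 <= m t) ->
  (exists C : R, forall t, 0 <= t -> m t <= C * t) ->
  (forall t, 0 <= t -> t < b -> m t = 0) ->
  (* mr is the right-continuous regularization t |-> m(t+) of m on [0,+oo) *)
  (forall t, 0 <= t -> m x @[x --> t^'+] --> mr t) ->
  {within `[0, +oo[, continuous Q} ->
  (forall t, 0 <= t -> 0 <= Q t) ->
  (exists A T : R, forall t, T <= t -> `|Q t| <= A * t) ->
  forall N : R, 0 <= N ->
  exists C2 : R, 0 <= C2 /\
    forall r R' : R, b <= r -> r < R' ->
      (\int[lebesgue_stieltjes_measure mr]_(t in `]r, R']) (Q t / t ^+ 2)%:E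
       <= C2%:E * \int[lebesgue_measure]_(t in `]r, R'])
                     ((t `^ N)%:E * tail_sup Q N t) + C2%:E)%E.
Proof.
move=> b0 mnd m0 [C1 hC] _ mrl Qc Q0 [A [T hQ]] N N0.
pose C := Num.max C1 0.
have C0 : 0 <= C by rewrite le_max lexx orbT.
have mC : forall t, 0 <= t -> m t <= C * t.
  move=> t t0; apply: le_trans (hC t t0) _.
  by apply: ler_wpM2r => //; rewrite le_max lexx.
pose T' := Num.max T b.
have bT' : b <= T' by rewrite le_max lexx orbT.
have cQ : {within `[b, T'], continuous Q}.
  apply: continuous_subspaceW Qc => x /=; rewrite !in_itv/= => /andP[h1 h2].
  by rewrite andbT; lra.
have [cm cmI cmM] := EVT_max bT' cQ.
pose M := Q cm.
have M0 : 0 <= M.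
  by apply: Q0; move: cmI; rewrite in_itv/= => /andP[h1 h2]; lra.
pose K := Num.max (M / b) (Num.max A 0).
have K0 : 0 <= K by rewrite !le_max lexx !orbT.
have QK : forall t, b <= t -> Q t <= K * t.
  move=> t bt; have t0 : 0 <= t by lra.
  case: (leP t T') => hT.
    have h1 : Q t <= M by apply: cmM; rewrite in_itv/= bt hT.
    apply: (le_trans h1).
    have h2 : M <= M / b * t.
      have eM : M = M / b * b by field; rewrite gt_eqF.
      rewrite [X in X <= _]eM; apply: ler_wpM2l => //.
      by rewrite divr_ge0// ltW.
    apply: (le_trans h2); apply: ler_wpM2r => //.
    by rewrite le_max lexx.
  have Tt : T <= t by move: hT; rewrite gt_max => /andP[h _]; exact: ltW.
  apply: le_trans (ler_norm _) _; apply: le_trans (hQ t Tt) _.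
  apply: ler_wpM2r => //.
  by rewrite !le_max lexx !orbT.
exists (Num.max (8 * C * 4 `^ N) (4 * C * K)); split.
  by rewrite le_max mulr_ge0 ?powR_ge0// mulr_ge0.
move=> r R' br rR.
have c0 : 0 <= 8 * C * 4 `^ N by rewrite mulr_ge0 ?powR_ge0// mulr_ge0.
have h := @main_ineq R b m Q mr C K N b0 mnd m0 C0 mC mrl Qc Q0 K0 QK N0 r R' br rR.
apply: (le_trans h); apply: leeD.
  apply: lee_wpmul2r.
    by apply: integral_ge0 => x; rewrite /= in_itv/= => /andP[h1 h2]; rewrite mule_ge0 ?lee_fin ?powR_ge0//; apply: (@ts_ge0 R b Q N b0 Q0); lra.
  by rewrite lee_fin le_max lexx.
by rewrite lee_fin le_max lexx orbT.
Qed.
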